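(* Assume the setting described in the context and suppose that for some $\gamma>1/2$, $\sum_i\lambda_i^{2\gamma-2\delta}<\infty$. Then almost surely, for every $s\in[0,1)$, the map $t\mapsto\Big(E\mapsto\int_s^tAS(t-r)E(\omega(r)-\omega(s))\,dr\Big)$ defines an element of $C_\gamma([s,1];L_2(L_2(V,V_\delta),V))$, and its $\gamma$-Hölder seminorm is bounded independently of $s\in[0,1]$.
   Context: $V$ is a separable real Hilbert space; $A$ is linear with $-A$ positive self-adjoint with compact inverse, orthonormal eigenbasis $(e_i)$, $-Ae_i=\lambda_ie_i$, $\lambda_i>0$, generating the analytic semigroup $S(t)$; $V_\delta=D((-A)^\delta)$ with $|x|_{V_\delta}=|(-A)^\delta x|$, $\delta\in[0,1]$, $\sum_i\lambda_i^{-2\delta}<\infty$; $\beta'\in(1/3,1/2)$. $L_2(X,Y)$ denotes Hilbert–Schmidt operators; $C_\gamma([s,1];X)$ is the space of $\gamma$-Hölder continuous $X$-valued functions. $Q$ is a positive symmetric trace-class operator on $V$ with $Qe_i=q_ie_i$, $q_i>0$, $\sum q_i<\infty$; $\omega$ is a $Q$-Wiener process on $[0,1]$ in $V$, in a version with $\gamma'$-Hölder paths for all $\gamma'<1/2$. *)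

(* Defs.v *)
(* V is represented in coordinates w.r.t. the
   orthonormal eigenbasis (e_i) of A, i.e. V ~ l^2(nat). *)
From HB Require Import structures.
From mathcomp Require Import all_boot all_order all_algebra.
From mathcomp Require Import all_classical all_reals all_analysis.
Set Implicit Arguments. Unset Strict Implicit. Unset Printing Implicit Defensive.
Import Order.TTheory GRing.Theory Num.Theory.
Import numFieldNormedType.Exports.
Local Open Scope classical_set_scope.
Local Open Scope ring_scope.

(* Centered Gaussian linear combinations: for a finite family of
   (coefficient a, coordinate index i, time t), Y = sum a * w_i(t) has
   characteristic function exp(-Var/2) with the covariance
   E[w_i(t) w_j(u)] = [i = j] q_i min(t,u).  This is exactly the law
   of a Q-Wiener process omega(t) = sum_i w_i(t) e_i with Q e_i = q_i e_i. *)
Definition QWiener {R : realType} {d : measure_display} {Omega : measurableType d}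
  (P : probability Omega R) (q : nat -> R) (w : nat -> R -> Omega -> R) : Prop :=
  (forall k t, 0 <= t <= 1 -> measurable_fun setT (w k t)) /\
  (forall c : seq (R * nat * R),
     all (fun p => 0 <= p.2 <= 1) c ->
     let Y := fun x => \sum_(p <- c) p.1.1 * w p.1.2 p.2 x in
     let v := \sum_(p <- c) \sum_(p' <- c)
                (p.1.1 * p'.1.1 *
                 (if p.1.2 == p'.1.2 then q p.1.2 * Num.min p.2 p'.2 else 0)) in
     (\int[P]_x (cos (Y x))%:E = (expR (- (v / 2)))%:E)%E /\
     (\int[P]_x (sin (Y x))%:E = 0)%E).

Definition holder_paths {R : realType} {Omega : Type}
  (w : nat -> R -> Omega -> R) : Prop :=
  forall x,
    (forall t, 0 <= t <= 1 -> (\sum_(k <oo) ((w k t x) ^+ 2)%:E < +oo)%E) /\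
    (forall g', 0 < g' < 2^-1 -> exists C : R, forall t u,
        0 <= t <= 1 -> 0 <= u <= 1 ->
        (\sum_(k <oo) ((w k t x - w k u x) ^+ 2)%:E
           <= (C ^+ 2 * `|t - u| `^ (2 * g'))%:E)%E).

(* The V-coordinate j of  int_s^t A S(t-r) E (omega(r)-omega(s)) dr  for
   E = e_j (x) e_k  (E y = <y,e_k> e_j), using A S(t-r) e_j = -l_j e^{-l_j (t-r)} e_j.
   For this E only coordinate j is nonzero. *)
Definition conv_coef {R : realType} {Omega : Type} (lam : nat -> R)
  (w : nat -> R -> Omega -> R) (x : Omega) (s t : R) (j k : nat) : R :=
  Rintegral lebesgue_measure `[s, t]
    (fun r => - lam j * expR (- (lam j * (t - r))) * (w k r x - w k s x)).

(* Squared Hilbert--Schmidt norm in L_2(L_2(V,V_delta),V) of T_t - T_u, where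
   T_t : E |-> int_s^t A S(t-r) E (omega(r)-omega(s)) dr.  It is computed on the
   orthonormal basis  (lam_j^{-delta} e_j (x) e_k)_{j,k}  of L_2(V,V_delta). *)
Definition HS_sq_diff {R : realType} {Omega : Type} (lam : nat -> R) (delta : R)
  (w : nat -> R -> Omega -> R) (x : Omega) (s t u : R) : \bar R :=
  (\sum_(j <oo) \sum_(k <oo)
     ((lam j `^ (- delta) * (conv_coef lam w x s t j k - conv_coef lam w x s u j k))
        ^+ 2)%:E)%E.

(* Main.v *)
Require Import Defs.
From HB Require Import structures.
From mathcomp Require Import all_boot all_order all_algebra.
From mathcomp Require Import all_classical all_reals all_analysis.
From mathcomp Require Import lra ring.
Import Order.TTheory GRing.Theory Num.Theory.
Import numFieldNormedType.Exports.
Local Open Scope classical_set_scope.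
Local Open Scope ring_scope.

Section S.
Context {R : realType}.
Notation mu := (@lebesgue_measure R).
Lemma lin_derive (l T y : R) : is_derive y 1 (fun r : R => - (l * (T - r))) l.
Proof.
have -> : (fun r : R => - (l * (T - r))) = (fun r => l * r - l * T).
  by apply/funext => r; rewrite mulrBr opprB.
by apply: is_derive_eq; rewrite subr0 /GRing.scale/= mulr1.
Qed.

Lemma exp_derive (l T x : R) :
  derivable (fun r => expR (- (l * (T - r)))) x 1 /\
  (fun r => expR (- (l * (T - r))))^`()%classic x = l * expR (- (l * (T - x))).
Proof.
have hf : derivable (fun r : R => - (l * (T - r))) x 1.
  by have := lin_derive l T x => /(@ex_derive _ _ _ _ _ _).
have E : (fun r => expR (- (l * (T - r)))) = expR \o (fun r : R => - (l * (T - r))).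
  by [].
split.
  rewrite E; apply/derivable1_diffP; apply: differentiable_comp; apply/derivable1_diffP => //.
rewrite E derive1_comp //.
have h1 := lin_derive l T x; have h2 := is_derive_expR (- (l * (T - x))).
rewrite !derive1E !derive_val.
by rewrite mulrC.
Qed.

Lemma FTC_exp (l T a b : R) : a <= b ->
  \int[mu]_(r in `[a,b]) (l * expR (- (l * (T - r)))) =
  expR (- (l * (T - b))) - expR (- (l * (T - a))).
Proof.
rewrite le_eqVlt => /predU1P[<-|ab].
  by rewrite set_itv1 Rintegral_set1 subrr.
have cF : continuous (fun r => expR (- (l * (T - r)))).
  move=> x; apply: differentiable_continuous; apply/derivable1_diffP.
  by case: (exp_derive l T x).
rewrite /Rintegral (@continuous_FTC2 _ _ (fun r => expR (- (l * (T - r))))) //.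
- apply: continuous_subspaceT => x.
  by apply: cvgM; [exact: cvg_cst | exact: cF].
- split.
  + by move=> x _; case: (exp_derive l T x).
  + exact: cvg_at_right_filter (cF a).
  + exact: cvg_at_left_filter (cF b).
- by move=> x _; case: (exp_derive l T x).
Qed.
Lemma holder_within (g : R -> R) (K a b : R) : 0 <= K ->
  (forall r r', a <= r <= b -> a <= r' <= b ->
     (g r - g r') ^+ 2 <= K * `|r - r'| `^ (2^-1)) ->
  {within `[a, b], continuous g}.
Proof.
move=> K0 H; apply/subspace_continuousP => x xab.
apply/cvgrPdist_lt => e e0.
rewrite near_withinE.
have K1 : 0 < K + 1 by rewrite ltr_pwDr.
have d0 : 0 < (e ^+ 2 / (K + 1)) ^+ 2 by rewrite exprn_gt0 // divr_gt0 // exprn_gt0.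
apply/nbhs_ballP; exists ((e ^+ 2 / (K + 1)) ^+ 2) => //= t.
rewrite /ball /= => xt tab.
have xab' : a <= x <= b by move: xab; rewrite /= in_itv.
have tab' : a <= t <= b by move: tab; rewrite /= in_itv.
have h := H x t xab' tab'.
rewrite powR12_sqrt // in h.
have hs : Num.sqrt `|x - t| < e ^+ 2 / (K + 1).
  have c0 : 0 <= e ^+ 2 / (K + 1) by rewrite divr_ge0 // ?exprn_ge0 // ltW.
  have := xt; rewrite -(@ltr_sqrt _ _ _ d0) sqrtr_sqr (ger0_norm c0) //.
have h2 : (g x - g t) ^+ 2 < e ^+ 2.
  apply: (le_lt_trans h).
  apply: (le_lt_trans (y := K * (e ^+ 2 / (K + 1)))).
    by rewrite ler_wpM2l // ltW.
  rewrite mulrA ltr_pdivrMr //.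
  have := exprn_gt0 2 e0; nra.
rewrite /from_subspace; rewrite -real_normK ?num_real // in h2.
have := normr_ge0 (g x - g t); nra.
Qed.
Implicit Types (A : set R) (f g : R -> R).

Lemma wcM A f g : {within A, continuous f} -> {within A, continuous g} ->
  {within A, continuous (fun x => f x * g x)}.
Proof.
move=> /subspace_continuousP cf /subspace_continuousP cg.
by apply/subspace_continuousP => x Ax; apply: cvgM; [exact: cf|exact: cg].
Qed.

Lemma wcD A f g : {within A, continuous f} -> {within A, continuous g} ->
  {within A, continuous (fun x => f x + g x)}.
Proof.
move=> /subspace_continuousP cf /subspace_continuousP cg.
by apply/subspace_continuousP => x Ax; apply: cvgD; [exact: cf|exact: cg].
Qed.

Lemma wcB A f g : {within A, continuous f} -> {within A, continuous g} ->
  {within A, continuous (fun x => f x - g x)}.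
Proof.
move=> /subspace_continuousP cf /subspace_continuousP cg.
by apply/subspace_continuousP => x Ax; apply: cvgB; [exact: cf|exact: cg].
Qed.

Lemma wc_cst A (c : R) : {within A, continuous (fun _ : R => c)}.
Proof. by apply: continuous_subspaceT => x; exact: cvg_cst. Qed.

Lemma wc_sum A (N : nat) (F : nat -> R -> R) :
  (forall k, {within A, continuous (F k)}) ->
  {within A, continuous (fun x => \sum_(k < N) F k x)}.
Proof.
move=> cF; elim: N => [|N IH].
  under [fun x => _]funext do rewrite big_ord0.
  exact: wc_cst.
under [fun x => _]funext do rewrite big_ord_recr /=.
exact: wcD.
Qed.

Lemma int_sub a b D f : {within `[a, b], continuous f} -> measurable D ->
  D `<=` `[a, b] -> mu.-integrable D (EFin \o f).
Proof.
move=> cf mD Dab; apply: (@integrableS _ _ _ mu `[a, b]%classic D) => //.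
apply: continuous_compact_integrable => //; exact: segment_compact.
Qed.

Lemma Rintegral_sumN D (N : nat) (F : nat -> R -> R) : measurable D ->
  (forall k, mu.-integrable D (EFin \o F k)) ->
  \int[mu]_(x in D) (\sum_(k < N) F k x) = \sum_(k < N) \int[mu]_(x in D) F k x.
Proof.
move=> mD iF; elim: N => [|N IH].
  under eq_Rintegral do rewrite big_ord0.
  by rewrite big_ord0 Rintegral_cst // mul0r.
under eq_Rintegral do rewrite big_ord_recr /=.
rewrite RintegralD //; first by rewrite IH big_ord_recr.
elim: N {IH} => [|N IH].
  under [fun x => _]funext do rewrite big_ord0.
  have -> : EFin \o (fun=> (0:R)) = cst 0%E by [].
  exact: integrable0.
under [fun x => _]funext do rewrite big_ord_recr /=.
have -> : EFin \o (fun x => \sum_(i < N) F i x + F N x) =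
   ((EFin \o (fun x => (\sum_(i < N) F i x)%R)) \+ (EFin \o F N))%E.
  by apply/funext => x; rewrite /= EFinD.
by apply: integrableD.
Qed.
End S.

Section K.
Variable R : realType.
Notation mu := (@lebesgue_measure R).
Variables (W : nat -> R -> R) (s M : R).
Hypothesis M0 : 0 <= M.
Hypothesis Hpart : forall N r, s <= r <= 1 ->
  \sum_(k < N) (W k r - W k s) ^+ 2 <= M.
Hypothesis Hcont : forall k, {within `[s, 1], continuous (W k)}.

Definition fk (l T r : R) := - l * expR (- (l * (T - r))).
Definition gk k r := W k r - W k s.
Definition cv l T k := \int[mu]_(r in `[s, T]) (fk l T r * gk k r).

Lemma cexp (l T : R) : continuous (fun r => expR (- (l * (T - r)))).
Proof.
move=> x; apply: differentiable_continuous; apply/derivable1_diffP.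
by case: (exp_derive l T x).
Qed.

Lemma cfk l T : continuous (fk l T).
Proof. by move=> x; apply: cvgM; [exact: cvg_cst | exact: cexp]. Qed.

Lemma wfk A l T : {within A, continuous (fk l T)}.
Proof. exact: continuous_subspaceT (cfk l T). Qed.

Lemma wgk u k : u <= 1 -> {within `[s, u], continuous (gk k)}.
Proof.
move=> u1; apply: wcB; last exact: wc_cst.
apply: continuous_subspaceW (Hcont k).
by apply: subset_itvl; rewrite bnd_simp.
Qed.

Lemma split_d l t u k : s <= t -> t <= u -> u <= 1 ->
  cv l u k - cv l t k =
  \int[mu]_(r in `]t, u]) (fk l u r * gk k r) +
  \int[mu]_(r in `[s, t]) ((fk l u r - fk l t r) * gk k r).
Proof.
move=> st tu u1.
have su : s <= u by apply: le_trans tu.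
have wc : forall T, {within `[s, u], continuous (fun r => fk l T r * gk k r)}.
  by move=> T; apply: wcM; [exact: wfk | exact: wgk].
have Ist : `[s, t] `<=` `[s, u] by apply: subset_itvl; rewrite bnd_simp.
rewrite /cv.
have -> : \int[mu]_(r in `]t, u]) (fk l u r * gk k r) =
   \int[mu]_(r in `[s, u]) (fk l u r * gk k r) -
   \int[mu]_(r in `[s, t]) (fk l u r * gk k r).
  rewrite Rintegral_itvB //.
  apply: (@int_sub _ s u `[s, u] _ (wc u)) => //.
under [X in _ = _ + X]eq_Rintegral do rewrite mulrBl.
rewrite RintegralB //; first by lra.
- by apply: (@int_sub _ s u `[s, t] _ (wc u)) => //.
- by apply: (@int_sub _ s u `[s, t] _ (wc t)) => //.
Qed.
Lemma sum_repr l t u N : s <= t -> t <= u -> u <= 1 ->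
  \sum_(k < N) (cv l u k - cv l t k) ^+ 2 =
  \int[mu]_(r in `]t, u]) (fk l u r * \sum_(k < N) ((cv l u k - cv l t k) * gk k r)) +
  \int[mu]_(r in `[s, t]) ((fk l u r - fk l t r) *
        \sum_(k < N) ((cv l u k - cv l t k) * gk k r)).
Proof.
move=> st tu u1.
have su : s <= u by apply: le_trans tu.
set d := fun k => cv l u k - cv l t k.
have Ist : `[s, t] `<=` `[s, u] by apply: subset_itvl; rewrite bnd_simp.
have Itu : `]t, u] `<=` `[s, u].
  by apply: subset_itvr; rewrite bnd_simp.
have wc1 : forall k, {within `[s, u], continuous (fun r => d k * (fk l u r * gk k r))}.
  by move=> k; apply: wcM; [exact: wc_cst | apply: wcM; [exact: wfk | exact: wgk]].
have wc2 : forall k, {within `[s, u], continuous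
     (fun r => d k * ((fk l u r - fk l t r) * gk k r))}.
  move=> k; apply: wcM; first exact: wc_cst.
  by apply: wcM; [apply: wcB; exact: wfk | exact: wgk].
have wc1' : forall k, {within `[s, u], continuous (fun r => fk l u r * gk k r)}.
  by move=> k; apply: wcM; [exact: wfk | exact: wgk].
have wc2' : forall k, {within `[s, u], continuous
     (fun r => (fk l u r - fk l t r) * gk k r)}.
  by move=> k; apply: wcM; [apply: wcB; exact: wfk | exact: wgk].
transitivity (\sum_(k < N) (d k * \int[mu]_(r in `]t, u]) (fk l u r * gk k r)
   + d k * \int[mu]_(r in `[s, t]) ((fk l u r - fk l t r) * gk k r))).
  by apply: eq_bigr => k _; rewrite -mulrDr -split_d.
rewrite big_split /=; congr (_ + _).
- transitivity (\sum_(k < N) \int[mu]_(r in `]t, u]) (d k * (fk l u r * gk k r))).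
    by apply: eq_bigr => k _; rewrite RintegralZl //; apply: (@int_sub _ s u _ _ (wc1' k)).
  rewrite -(@Rintegral_sumN _ _ N (fun k r => d k * (fk l u r * gk k r))) //.
    by apply: eq_Rintegral => r _; rewrite mulr_sumr; apply: eq_bigr => k _; rewrite mulrCA.
  by move=> k; apply: (@int_sub _ s u _ _ (wc1 k)).
- transitivity (\sum_(k < N) \int[mu]_(r in `[s, t]) (d k * ((fk l u r - fk l t r) * gk k r))).
    by apply: eq_bigr => k _; rewrite RintegralZl //; apply: (@int_sub _ s u _ _ (wc2' k)).
  rewrite -(@Rintegral_sumN _ _ N (fun k r => d k * ((fk l u r - fk l t r) * gk k r))) //.
    by apply: eq_Rintegral => r _; rewrite mulr_sumr; apply: eq_bigr => k _; rewrite mulrCA.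
  by move=> k; apply: (@int_sub _ s u _ _ (wc2 k)).
Qed.
Lemma amgm (a b c : R) : 0 < c -> a * b <= a ^+ 2 / (2 * c) + c * b ^+ 2 / 2.
Proof.
move=> c0; rewrite -subr_ge0.
have -> : a ^+ 2 / (2 * c) + c * b ^+ 2 / 2 - a * b = (a - c * b) ^+ 2 / (2 * c).
  by field; rewrite gt_eqF.
by rewrite divr_ge0 // ?sqr_ge0 // mulr_ge0 // ltW.
Qed.

Lemma G_bound (d : nat -> R) N c r : 0 < c -> s <= r <= 1 ->
  `| \sum_(k < N) (d k * gk k r) | <=
    (\sum_(k < N) d k ^+ 2) / (2 * c) + c * M / 2.
Proof.
move=> c0 sr.
apply: (le_trans (ler_norm_sum _ _ _)).
apply: (le_trans (y := \sum_(k < N) (d k ^+ 2 / (2 * c) + c * (gk k r) ^+ 2 / 2))).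
  apply: ler_sum => k _; rewrite normrM.
  by have := @amgm `|d k| `|gk k r| c c0; rewrite !real_normK ?num_real.
rewrite big_split /= -mulr_suml; apply: lerD => //.
rewrite -mulr_suml -mulr_sumr ler_pM2r // ler_pM2l //; exact: Hpart.
Qed.

Lemma fk_diff l t u r :
  fk l u r - fk l t r =
  (1 - expR (- (l * (u - t)))) * (l * expR (- (l * (t - r)))).
Proof.
rewrite /fk.
have -> : expR (- (l * (u - r))) = expR (- (l * (u - t))) * expR (- (l * (t - r))).
  by rewrite -expRD; congr expR; ring.
ring.
Qed.

Lemma S_le l t u N c : 0 < l -> 0 < c -> s <= t -> t <= u -> u <= 1 ->
  \sum_(k < N) (cv l u k - cv l t k) ^+ 2 <=
  ((\sum_(k < N) (cv l u k - cv l t k) ^+ 2) / (2 * c) + c * M / 2) *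
    (2 * (1 - expR (- (l * (u - t))))).
Proof.
move=> l0 c0 st tu u1.
have su : s <= u by apply: le_trans tu.
set S := \sum_(k < N) _.
set B := S / (2 * c) + c * M / 2.
set e := expR (- (l * (u - t))).
have S0 : 0 <= S by apply: sumr_ge0 => k _; exact: sqr_ge0.
have B0 : 0 <= B.
  by rewrite /B addr_ge0 // ?divr_ge0 // ?mulr_ge0 // ltW.
have e1 : 0 <= 1 - e.
  by rewrite subr_ge0 /e expR_le1 oppr_le0 mulr_ge0 // ?subr_ge0 // ltW.
have Ist : `[s, t] `<=` `[s, u] by apply: subset_itvl; rewrite bnd_simp.
have Itu : `]t, u] `<=` `[s, u] by apply: subset_itvr; rewrite bnd_simp.
set G := fun r => \sum_(k < N) ((cv l u k - cv l t k) * gk k r).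
have wG : {within `[s, u], continuous G}.
  apply: (@wc_sum _ _ N (fun k r => (cv l u k - cv l t k) * gk k r)) => k.
  by apply: wcM; [exact: wc_cst | exact: wgk].
have GB : forall r, s <= r <= u -> `|G r| <= B.
  move=> r /andP[sr ru]; apply: (@G_bound (fun k => cv l u k - cv l t k) N c r) => //.
  by rewrite sr (le_trans ru).
have wP : forall T, {within `[s, u], continuous (fun r => l * expR (- (l * (T - r))))}.
  move=> T; apply: continuous_subspaceT => x.
  by apply: cvgM; [exact: cvg_cst | exact: cexp].
rewrite {1}/S sum_repr // -/G.
have I1 : \int[mu]_(r in `]t, u]) (fk l u r * G r) <= B * (1 - e).
  apply: (le_trans (y := \int[mu]_(r in `]t, u]) (l * expR (- (l * (u - r))) * B))).
    apply: le_Rintegral => //.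
    - apply: (@int_sub _ s u) => //; apply: wcM => //; exact: wfk.
    - apply: (@int_sub _ s u) => //; apply: wcM => //; exact: wc_cst.
    - move=> r; rewrite /= in_itv /= => /andP[tr ru].
      apply: (le_trans (ler_norm _)); rewrite normrM.
      have -> : `|fk l u r| = l * expR (- (l * (u - r))).
        by rewrite /fk normrM normrN !ger0_norm ?expR_ge0 // ltW.
      apply: ler_wpM2l; first by rewrite mulr_ge0 ?expR_ge0 // ltW.
      by apply: GB; rewrite ru andbT (le_trans st) // ltW.
  rewrite RintegralZr //; last first.
    by apply: (@int_sub _ s u _ _ (wP u)).
  rewrite Rintegral_itv_obnd_cbnd; last by apply: (@int_sub _ s u _ _ (wP u)).
  rewrite FTC_exp // subrr mulr0 oppr0 expR0 mulrC.
  by [].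
have I2 : \int[mu]_(r in `[s, t]) ((fk l u r - fk l t r) * G r) <= B * (1 - e).
  apply: (le_trans (y := \int[mu]_(r in `[s, t]) ((1 - e) * (l * expR (- (l * (t - r)))) * B))).
    apply: le_Rintegral => //.
    - apply: (@int_sub _ s u) => //; apply: wcM => //; apply: wcB; exact: wfk.
    - apply: (@int_sub _ s u) => //; apply: wcM; last exact: wc_cst.
      by apply: wcM; [exact: wc_cst | exact: wP].
    - move=> r; rewrite /= in_itv /= => /andP[sr rt].
      rewrite fk_diff -/e.
      apply: (le_trans (ler_norm _)); rewrite normrM.
      rewrite ger0_norm; last by rewrite mulr_ge0 // mulr_ge0 ?expR_ge0 // ltW.
      apply: ler_wpM2l; first by rewrite mulr_ge0 // mulr_ge0 ?expR_ge0 // ltW.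
      by apply: GB; rewrite sr (le_trans rt).
  rewrite RintegralZr //; last first.
    apply: (@int_sub _ s u) => //.
    by apply: wcM; [exact: wc_cst | exact: wP].
  rewrite RintegralZl //; last by apply: (@int_sub _ s u _ _ (wP t)).
  rewrite FTC_exp // subrr mulr0 oppr0 expR0.
  rewrite mulrC ler_wpM2l //.
  rewrite -[leRHS]mulr1 ler_wpM2l // lerBlDr lerDl expR_ge0.
apply: le_trans (lerD I1 I2) _.
by rewrite -mulrDr; apply: ler_wpM2l => //; rewrite mulr2n mulrDl mul1r.
Qed.
Lemma key l t u N : 0 < l -> s <= t -> t <= u -> u <= 1 ->
  \sum_(k < N) (cv l t k - cv l u k) ^+ 2 <=
  M * (2 * (1 - expR (- (l * (u - t))))) ^+ 2.
Proof.
move=> l0 st tu u1.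
have -> : \sum_(k < N) (cv l t k - cv l u k) ^+ 2 =
          \sum_(k < N) (cv l u k - cv l t k) ^+ 2.
  by apply: eq_bigr => k _; rewrite -sqrrN opprB.
set S := \sum_(k < N) _.
set L := 2 * (1 - expR (- (l * (u - t)))).
have S0 : 0 <= S by apply: sumr_ge0 => k _; exact: sqr_ge0.
have H : forall c, 0 < c -> S <= (S / (2 * c) + c * M / 2) * L.
  by move=> c c0; apply: S_le.
have L0 : 0 <= L.
  rewrite /L mulr_ge0 // subr_ge0 expR_le1 oppr_le0 mulr_ge0 // ?subr_ge0 //.
  exact: ltW.
case: (ltrP 0 L) => Lp.
  have := H L Lp.
  have -> : (S / (2 * L) + L * M / 2) * L = S / 2 + M * L ^+ 2 / 2.
    by field; rewrite gt_eqF.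
  move=> h; lra.
have L00 : L = 0 by apply/eqP; rewrite eq_le Lp L0.
have := H 1 ltr01; rewrite L00 mulr0 => h.
by rewrite expr0n /= mulr0.
Qed.
End K.

Section F.
Context {R : realType}.

Lemma series_le_bound (u : nat -> \bar R) (B : \bar R) :
  (forall n, (0 <= u n)%E) ->
  (forall N, (\sum_(0 <= i < N) u i <= B)%E) -> (\sum_(i <oo) u i <= B)%E.
Proof.
move=> u0 hN; apply: lime_le.
  by apply: is_cvg_nneseries => n _ _; exact: u0.
by apply: nearW => N; exact: hN.
Qed.

Lemma partial_le_series (u : nat -> R) N :
  (forall n, 0 <= u n) ->
  ((\sum_(k < N) u k)%:E <= \sum_(i <oo) (u i)%:E)%E.
Proof.
move=> u0; rewrite -sumEFin -(big_mkord xpredT (fun k => (u k)%:E)).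
by apply: nneseries_lim_ge => n _ _; rewrite lee_fin.
Qed.

Lemma onemexp (y g : R) : 0 <= y -> 0 < g -> g <= 1 -> 1 - expR (- y) <= y `^ g.
Proof.
move=> y0 g0 g1.
case: (ltrP y 1) => y1.
  have h1 : 1 - expR (- y) <= y by have := expR_ge1Dx (- y); lra.
  apply: (le_trans h1).
  case: (eqVneq y 0) => [->|yn0]; first by rewrite powR0 ?gt_eqF.
  by apply: ger1_powR => //; rewrite ltW // lt_neqAle eq_sym yn0 y0.
have h1 : 1 - expR (- y) <= 1 by rewrite lerBlDr lerDl expR_ge0.
apply: (le_trans h1).
by rewrite -[X in X <= _](powRr0 y); apply: ler_powR => //; exact: ltW.
Qed.

Lemma sqr_powR (a p : R) : 0 < a -> (a `^ p) ^+ 2 = a `^ (2 * p).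
Proof.
move=> a0; rewrite expr2 -powRD; last by apply/implyP => _; rewrite gt_eqF.
by congr powR; ring.
Qed.

Lemma no_div (lam : nat -> R) (p : R) : lam @ \oo --> +oo -> 0 <= p ->
  (\sum_(i <oo) (lam i `^ p)%:E < +oo)%E -> False.
Proof.
move=> /cvgryPge /(_ 1) hl p0 hs.
case: hl => N _ hN.
have s0 : (0 <= \sum_(i <oo) (lam i `^ p)%:E)%E.
  by apply: nneseries_ge0 => n _ _; rewrite lee_fin powR_ge0.
set X := fine (\sum_(i <oo) (lam i `^ p)%:E).
have X0 : 0 <= X by apply: fine_ge0.
have hX := archi_boundP X0.
set K := Num.Def.archi_bound X in hX.
have := partial_le_series (fun i => lam i `^ p) (N + K) (fun n => powR_ge0 _ _).
rewrite -(fineK (x := \sum_(i <oo) (lam i `^ p)%:E)); last first.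
  by rewrite ge0_fin_numE.
rewrite lee_fin -/X => hle.
have : K%:R <= \sum_(k < N + K) lam k `^ p.
  rewrite -(big_mkord xpredT (fun k => lam k `^ p)).
  rewrite (big_cat_nat (n := N)) //=; last by rewrite leq_addr.
  apply: (le_trans (y := 0 + \sum_(N <= k < N + K) 1)).
    by rewrite add0r sumr_const_nat addnC addnK.
  apply: lerD.
    by apply: sumr_ge0 => k _; exact: powR_ge0.
  apply: ler_sum_nat => k /andP[Nk _].
  have := hN k Nk; rewrite /= => l1.
  by rewrite -(powRr0 (lam k)); apply: ler_powR.
lra.
Qed.
End F.

Theorem lemma5p2 (R : realType) (lam q : nat -> R) (delta gamma : R)
  (d : measure_display) (Omega : measurableType d) (P : probability Omega R)
  (w : nat -> R -> Omega -> R) :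
  (forall i, 0 < lam i) ->
  lam @ \oo --> +oo ->
  0 <= delta <= 1 ->
  (\sum_(i <oo) (lam i `^ (- (2 * delta)))%:E < +oo)%E ->
  (forall i, 0 < q i) ->
  (\sum_(i <oo) (q i)%:E < +oo)%E ->
  QWiener P q w ->
  holder_paths w ->
  2^-1 < gamma ->
  (\sum_(i <oo) (lam i `^ (2 * gamma - 2 * delta))%:E < +oo)%E ->
  {ae P, forall x, exists C : R, forall s t u,
      0 <= s < 1 -> s <= t <= 1 -> s <= u <= 1 ->
      (HS_sq_diff lam delta w x s t u <= (C ^+ 2 * `|t - u| `^ (2 * gamma))%:E)%E}.
Proof.
move=> lam0 lamoo /andP[d0 d1] _ _ _ _ HP g12 sumg.
apply: aeW => x.
have g0 : 0 < gamma by apply: lt_trans g12; rewrite invr_gt0.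
have g1 : gamma <= 1.
  rewrite leNgt; apply/negP => g1.
  have hp : 0 <= 2 * gamma - 2 * delta by lra.
  exact: (@no_div _ lam _ lamoo hp sumg).
have [_ Hx] := HP x.
have [C0 HC] : exists C0 : R, forall t u, 0 <= t <= 1 -> 0 <= u <= 1 ->
    (\sum_(k <oo) ((w k t x - w k u x) ^+ 2)%:E
       <= (C0 ^+ 2 * `|t - u| `^ (2 * 4^-1))%:E)%E.
  apply: Hx; apply/andP; split; first by rewrite invr_gt0.
  by rewrite ltf_pV2 ?posrE //; lra.
set W := fun k r => w k r x.
set M := C0 ^+ 2.
have M0 : 0 <= M by apply: sqr_ge0.
have hpart : forall N r r', 0 <= r <= 1 -> 0 <= r' <= 1 ->
    \sum_(k < N) (W k r - W k r') ^+ 2 <= M * `|r - r'| `^ (2^-1).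
  move=> N r r' hr hr'.
  have := le_trans (partial_le_series (fun k => (W k r - W k r') ^+ 2) N
      (fun n => sqr_ge0 _)) (HC r r' hr hr').
  by rewrite lee_fin (_ : 2 * 4^-1 = 2^-1 :> R) //; field.
have hM : forall N r r', 0 <= r <= 1 -> 0 <= r' <= 1 ->
    \sum_(k < N) (W k r - W k r') ^+ 2 <= M.
  move=> N r r' hr hr'; apply: (le_trans (hpart N r r' hr hr')).
  rewrite -[leRHS]mulr1 ler_wpM2l // powR12_sqrt // -sqrtr1 ler_sqrt //.
  rewrite ler_norml; move: hr hr' => /andP[? ?] /andP[? ?]; apply/andP; split; lra.
have hone : forall k r r', 0 <= r <= 1 -> 0 <= r' <= 1 ->
    (W k r - W k r') ^+ 2 <= M * `|r - r'| `^ (2^-1).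
  move=> k r r' hr hr'; apply: le_trans (hpart k.+1 r r' hr hr').
  rewrite big_ord_recr /= lerDr; apply: sumr_ge0 => i _; exact: sqr_ge0.
have Sg0 : (0 <= \sum_(i <oo) (lam i `^ (2 * gamma - 2 * delta))%:E)%E.
  by apply: nneseries_ge0 => n _ _; rewrite lee_fin powR_ge0.
set S0 := fine (\sum_(i <oo) (lam i `^ (2 * gamma - 2 * delta))%:E)%E.
have S0E : (\sum_(i <oo) (lam i `^ (2 * gamma - 2 * delta))%:E = S0%:E)%E.
  by rewrite /S0 fineK // ge0_fin_numE.
have S00 : 0 <= S0 by apply: fine_ge0.
have main : forall s t u, 0 <= s < 1 -> s <= t -> t <= u -> u <= 1 ->
   (HS_sq_diff lam delta w x s t u <=
     ((4 * M * S0) * `|t - u| `^ (2 * gamma))%:E)%E.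
  move=> s t u /andP[s0 s1] st tu u1.
  have Hpart : forall N r, s <= r <= 1 ->
      \sum_(k < N) (W k r - W k s) ^+ 2 <= M.
    move=> N r /andP[sr r1]; apply: hM; apply/andP; split; lra.
  have Hcont : forall k, {within `[s, 1], continuous (W k)}.
    move=> k; apply: (@holder_within _ _ M) => // r r' /andP[? ?] /andP[? ?].
    by apply: hone; apply/andP; split; lra.
  set c := 4 * M * `|t - u| `^ (2 * gamma).
  rewrite /HS_sq_diff.
  apply: (le_trans (y := \sum_(j <oo) (c * lam j `^ (2 * gamma - 2 * delta))%:E)%E).
    apply: lee_nneseries.
      move=> j _ _; apply: nneseries_ge0 => n _ _; rewrite lee_fin; exact: sqr_ge0.
    move=> j _; apply: series_le_bound => [k|N]; first by rewrite lee_fin sqr_ge0.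
    rewrite big_mkord sumEFin lee_fin.
    have E : forall T k, conv_coef lam w x s T j k = cv R W s (lam j) T k by [].
    under eq_bigr do rewrite !E exprMn.
    rewrite -mulr_sumr.
    have hk := @key R W s M M0 Hpart Hcont (lam j) t u N (lam0 j) st tu u1.
    apply: (le_trans (ler_wpM2l (sqr_ge0 _) hk)).
    rewrite sqr_powR //.
    set e := expR (- (lam j * (u - t))).
    have h0 : 0 <= u - t by lra.
    have he : 1 - e <= (lam j * (u - t)) `^ gamma.
      by apply: onemexp => //; rewrite mulr_ge0 // ltW.
    have he0 : 0 <= 1 - e.
      by rewrite subr_ge0 /e expR_le1 oppr_le0 mulr_ge0 // ltW.
    have hsq : (2 * (1 - e)) ^+ 2 <= 4 * (lam j `^ (2 * gamma) * `|t - u| `^ (2 * gamma)).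
      have hy : 0 <= lam j * (u - t) by rewrite mulr_ge0 // ltW.
      have -> : lam j `^ (2 * gamma) * `|t - u| `^ (2 * gamma) =
                ((lam j * (u - t)) `^ gamma) ^+ 2.
        rewrite -powR_mulrn ?powR_ge0 // -powRrM (mulrC gamma) powRM ?(ltW (lam0 j)) //.
        by rewrite distrC ger0_norm.
      have := powR_ge0 (lam j * (u - t)) gamma; nra.
    apply: (le_trans (y := lam j `^ (2 * - delta) *
        (M * (4 * (lam j `^ (2 * gamma) * `|t - u| `^ (2 * gamma)))))).
      by rewrite ler_wpM2l ?powR_ge0 // ler_wpM2l.
    rewrite /c (_ : 2 * gamma - 2 * delta = 2 * gamma + 2 * - delta); last by ring.
    rewrite powRD; last by apply/implyP => _; rewrite gt_eqF.
    by rewrite le_eqVlt; apply/orP; left; apply/eqP; ring.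
  under eq_eseriesr do rewrite EFinM.
  rewrite nneseriesZl; last by move=> i _; rewrite lee_fin powR_ge0.
  rewrite S0E -EFinM lee_fin /c.
  by rewrite le_eqVlt; apply/orP; left; apply/eqP; ring.
have C2 : 0 <= 4 * M * S0 by rewrite mulr_ge0 // mulr_ge0.
exists (Num.sqrt (4 * M * S0)) => s t u hs /andP[st t1] /andP[su u1].
rewrite sqr_sqrtr //.
case: (leP t u) => tu; first exact: main.
have -> : HS_sq_diff lam delta w x s t u = HS_sq_diff lam delta w x s u t.
  rewrite /HS_sq_diff; apply: eq_eseriesr => j _; apply: eq_eseriesr => k _.
  by rewrite -(sqrrN (_ * _)) -mulrN opprB.
rewrite distrC; apply: main => //; exact: ltW.
Qed.
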